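(* For every $n\ge21$ and every integer $t$ with $\frac{n^2}{8}+\frac{n}{4}-\frac{11}{8}\le t\le \frac{n^2}{8}+\frac{n}{2}-2$, there exists an $(n,t)$-blocker.
   Context: For a convex $n$-gon: an edge is a segment between two vertices; diagonals are edges that are not sides of the polygon. Two edges cross if they share an interior point. A triangulation is a maximal set of pairwise non-crossing diagonals. A blocker is a set $B$ of diagonals having a diagonal in common with every triangulation; it is saturated if for every $e\in B$, $B\setminus\{e\}$ is not a blocker. An $(n,t)$-blocker is a saturated blocker of size $t$ for a convex $n$-gon. *)

(* Defs.v *)
(* A convex n-gon has vertices 0,1,...,n-1 ('I_n) in cyclic
   order. An edge is stored as an ordered pair (i, j) with i < j. *)
From mathcomp Require Import all_boot.
Set Implicit Arguments. Unset Strict Implicit. Unset Printing Implicit Defensive.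

Section Polygon.
Variable n : nat.

Definition is_side (e : 'I_n * 'I_n) : bool :=
  (e.1 < e.2) && ((e.2 == e.1.+1 :> nat) || ((e.1 == 0 :> nat) && (e.2 == n.-1 :> nat))).

Definition is_diagonal (e : 'I_n * 'I_n) : bool :=
  (e.1 < e.2) && ~~ is_side e.

(* two distinct edges of a convex polygon share an interior point iff
   their endpoints strictly interleave along the boundary *)
Definition cross (e f : 'I_n * 'I_n) : bool :=
  ((e.1 < f.1) && (f.1 < e.2) && (e.2 < f.2)) ||
  ((f.1 < e.1) && (e.1 < f.2) && (f.2 < e.2)).

Definition diagonals : {set 'I_n * 'I_n} := [set e | is_diagonal e].

Definition noncrossing (S : {set 'I_n * 'I_n}) : bool :=
  [forall e in S, forall f in S, ~~ cross e f].

Definition triangulation (T : {set 'I_n * 'I_n}) : bool :=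
  [&& T \subset diagonals, noncrossing T &
      [forall S : {set 'I_n * 'I_n},
         ((S \subset diagonals) && noncrossing S && (T \subset S)) ==> (S == T)]].

Definition blocker (B : {set 'I_n * 'I_n}) : bool :=
  (B \subset diagonals) &&
  [forall T : {set 'I_n * 'I_n}, triangulation T ==> (B :&: T != set0)].

Definition saturated_blocker (B : {set 'I_n * 'I_n}) : bool :=
  blocker B && [forall e in B, ~~ blocker (B :\ e)].

Definition nt_blocker (t : nat) (B : {set 'I_n * 'I_n}) : bool :=
  saturated_blocker B && (#|B| == t).

End Polygon.

(* Main.v *)
Require Import Defs.
From mathcomp Require Import all_boot.
From mathcomp Require Import zify.
Set Implicit Arguments. Unset Strict Implicit. Unset Printing Implicit Defensive.

Section Gen.
Variable n : nat.
Local Notation E := ('I_n * 'I_n)%type.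

Lemma diagE (g : E) : is_diagonal g = (g.1.+1 < g.2) && ~~ ((g.1 == 0 :> nat) && (g.2 == n.-1 :> nat)).
Proof. rewrite /is_diagonal /is_side. have := ltn_ord g.2. lia. Qed.

Lemma crossC (e f : E) : cross e f = cross f e.
Proof. rewrite /cross. lia. Qed.

Lemma cross_irr (e : E) : cross e e = false.
Proof. rewrite /cross. lia. Qed.

Lemma noncrossingP (S : {set E}) :
  reflect (forall e f, e \in S -> f \in S -> ~~ cross e f) (noncrossing S).
Proof.
apply: (iffP forallP) => [H e f eS fS | H e].
  by have := H e; rewrite eS /= => /forallP /(_ f); rewrite fS.
by apply/implyP => eS; apply/forallP => f; apply/implyP => fS; apply: H.
Qed.

Lemma triangulation_of (T : {set E}) :
  (forall g, g \in T -> is_diagonal g) ->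
  (forall e f, e \in T -> f \in T -> ~~ cross e f) ->
  (forall g, is_diagonal g -> g \notin T -> exists2 f, f \in T & cross f g) ->
  triangulation T.
Proof.
move=> Hd Hnc Hmax; apply/and3P; split.
- by apply/subsetP => g /Hd; rewrite inE.
- exact/noncrossingP.
apply/forallP => S; apply/implyP => /andP [/andP [SD /noncrossingP SNC] TS].
rewrite eqEsubset TS andbT; apply/subsetP => g gS.
apply/negPn/negP => gT.
have gd : is_diagonal g by move/subsetP: SD => /(_ g gS); rewrite inE.
have [f fT cfg] := Hmax g gd gT.
by move: (SNC f g (subsetP TS f fT) gS); rewrite cfg.
Qed.

Lemma triangulation_cross (T : {set E}) : triangulation T ->
  forall g, is_diagonal g -> g \notin T -> exists2 f, f \in T & cross f g.
Proof.
case/and3P => TD /noncrossingP TNC /forallP Hmax g gd gT.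
case: (pickP (fun f => (f \in T) && cross f g)) => [f /andP [fT c] | Hno].
  by exists f.
exfalso.
have := Hmax (g |: T).
have -> : (g |: T) \subset diagonals n.
  apply/subsetP => x; rewrite !inE => /orP [/eqP -> //|xT].
  by move/subsetP: TD => /(_ x xT); rewrite inE.
rewrite subsetUr andbT /=.
have -> : noncrossing (g |: T).
  apply/noncrossingP => e f; rewrite !inE.
  case/orP => [/eqP -> | eT]; case/orP => [/eqP -> | fT].
  - by rewrite cross_irr.
  - by rewrite crossC; have := Hno f; rewrite fT /= => ->.
  - by have := Hno e; rewrite eT /= => ->.
  - exact: TNC.
move=> /= /eqP HT.
by move: gT; rewrite -HT setU11.
Qed.

Definition edgeb (T : {set E}) (u v : nat) : bool :=
  (u.+1 == v) || ((u == 0) && (v == n.-1)) ||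
  [exists g in T, (g.1 == u :> nat) && (g.2 == v :> nat)].

Lemma edgebP (T : {set E}) u v : edgeb T u v ->
  [\/ u.+1 = v, (u = 0 /\ v = n.-1) | exists2 g, g \in T & (g.1 = u :> nat) /\ (g.2 = v :> nat)].
Proof.
rewrite /edgeb; case/orP => [/orP [/eqP -> | /andP [/eqP -> /eqP ->]]|].
- by constructor 1.
- by constructor 2.
case/existsP => g /andP [gT /andP [/eqP H1 /eqP H2]]; constructor 3; by exists g.
Qed.


Definition crossn (a b c d : nat) : bool :=
  ((a < c) && (c < b) && (b < d)) || ((c < a) && (a < d) && (d < b)).

Lemma edge_nocross (T : {set E}) u v f :
  noncrossing T -> edgeb T u v -> f \in T -> ~~ crossn u v f.1 f.2.
Proof.
move=> /noncrossingP NC /edgebP [H|[H1 H2]|[g gT [H1 H2]]] fT.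
- rewrite /crossn; lia.
- have := ltn_ord f.2; rewrite /crossn; lia.
- have := NC g f gT fT; rewrite /cross /crossn -H1 -H2; exact.
Qed.

Lemma triangle (T : {set E}) : triangulation T ->
  forall u v, v < n -> u.+1 < v -> edgeb T u v ->
  exists k, [/\ u < k < v, edgeb T u k & edgeb T k v].
Proof.
move=> Htr u v vn uv euv.
have NC : noncrossing T by case/and3P: Htr.
pose P := fun k => (u < k < v) && edgeb T u k.
have exP : exists k, P k.
  by exists u.+1; rewrite /P /edgeb eqxx /=; lia.
have ubP : forall k, P k -> k <= v by move=> k /andP [H _]; lia.
case: (ex_maxnP exP ubP) => k /andP [ukv euk] Hmax.
exists k; split => //.
case: (boolP (edgeb T k v)) => // ekv; exfalso.
have kd : k.+1 < v.
  rewrite ltn_neqAle; apply/andP; split; last lia.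
  by apply/eqP => H; move: ekv; rewrite /edgeb H eqxx.
have kn : k < n by lia.
pose g : E := (Ordinal kn, Ordinal vn).
have gd : is_diagonal g by rewrite diagE /=; lia.
have gT : g \notin T.
  apply/negP => gT; move/negP: ekv; apply.
  by rewrite /edgeb; apply/orP; right; apply/existsP; exists g; rewrite gT /= !eqxx.
have [[f1 f2] fT cfg] := triangulation_cross Htr gd gT.
move: cfg; rewrite /cross /= => cfg.
have := edge_nocross NC euv fT.
have := edge_nocross NC euk fT.
rewrite /crossn /= => nuk nuv.
have [H1|H1] : f1 = u :> nat \/ f1 <> u :> nat by lia.
  have : P f2.
    rewrite /P; apply/andP; split; first lia.
    by rewrite /edgeb; apply/orP; right; apply/existsP; exists (f1, f2); rewrite fT /= H1 !eqxx.
  move/Hmax; lia.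
lia.
Qed.


Definition inner (i j : nat) (g : E) : bool := (i <= g.1) && (g.2 <= j).
Definition outer (i j : nat) (g : E) : bool :=
  (g.2 <= i) || (j <= g.1) || ((g.1 <= i) && (j <= g.2)).
Definition hasv (h : nat) (g : E) : bool := (g.1 == h :> nat) || (g.2 == h :> nat).

Definition dfan (i j h1 h2 : nat) : {set E} :=
  [set g : E | is_diagonal g &&
     [|| (g.1 == i :> nat) && (g.2 == j :> nat),
         inner i j g && hasv h1 g | outer i j g && hasv h2 g]].

Ltac wit a b := let Ha := fresh "Ha" in let Hb := fresh "Hb" in
  (have Ha : a < n by lia); (have Hb : b < n by lia);
  exists (Ordinal Ha, Ordinal Hb);
  [rewrite inE diagE /inner /outer /hasv /=; lia | rewrite /cross /=; lia].

Lemma dfan_tri i j h1 h2 : i.+1 < j -> j < n -> ~~ ((i == 0) && (j == n.-1)) ->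
  i < h1 < j -> (h2 < i) || (j < h2) -> h2 < n -> triangulation (dfan i j h1 h2).
Proof.
move=> ij jn nij ih1 h2o h2n.
apply: triangulation_of.
- by move=> g; rewrite inE => /andP [].
- move=> [e1 e2] [f1 f2]; rewrite !inE !diagE /inner /outer /hasv /cross /=.
  move=> /andP [d1 m1] /andP [d2 m2].
  by case/or3P: m1 => m1; case/or3P: m2 => m2; lia.
move=> [s t]; rewrite inE diagE /inner /outer /hasv /= => gd gT.
have sn := ltn_ord s; have tn := ltn_ord t.
have ne : ~~ ((s == i :> nat) && (t == j :> nat)) by move: gT; rewrite gd /=; case: (_ && _).
have nh1 : ~~ ((i <= s) && (t <= j) && ((s == h1 :> nat) || (t == h1 :> nat))).
  by move: gT; rewrite gd /=; case: ((i <= s) && (t <= j) && _); rewrite ?orbT.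
have nh2 : ~~ (((t <= i) || (j <= s) || (s <= i) && (j <= t)) && ((s == h2 :> nat) || (t == h2 :> nat))).
  by move: gT; rewrite gd /=; case: (((t <= i) || (j <= s) || (s <= i) && (j <= t)) && _); rewrite ?orbT.
clear gT.
have [c|c] : ((i < s < j) && (j < t)) || ((s < i < t) && (t < j)) \/
    ~~ (((i < s < j) && (j < t)) || ((s < i < t) && (t < j))) by lia.
  wit i j.
have [inn|out] : (i <= s) && (t <= j) \/ ~~ ((i <= s) && (t <= j)) by lia.
  clear nh2.
  have [c1|c1] : s < h1 < t \/ ~~ (s < h1 < t) by lia.
    have [c2|c2] : i < s \/ i = s by lia.
      wit i h1.
    wit h1 j.
  have [c5|c5] : h1 < s \/ t < h1 by lia.
    wit h1 s.+1.
  wit s.+1 h1.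
clear nh1.
have [c1|c1] : s < h2 < t \/ ~~ (s < h2 < t) by lia.
  have [c2|c2] : 0 < s \/ (s : nat) = 0 by lia.
    wit 0 h2.
  wit h2 n.-1.
have [c2|c2] : (t <= i) || (j <= s) \/ ~~ ((t <= i) || (j <= s)) by lia.
  have [c3|c3] : h2 < s \/ t < h2 by lia.
    wit h2 s.+1.
  wit s.+1 h2.
have [c3|c3] : s < i \/ (s : nat) = i by lia.
  have [c4|c4] : h2 < s \/ t < h2 by lia.
    wit h2 s.+1.
  wit s.+1 h2.
have [c4|c4] : h2 < s \/ t < h2 by lia.
  wit h2 t.-1.
wit t.-1 h2.
Qed.

End Gen.


Section Fam.
Variable n : nat.
Local Notation E := ('I_n * 'I_n)%type.

Definition I (a b : nat) : {set 'I_n} := [set i : 'I_n | a <= i < b].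

Lemma card_I a b : b <= n -> #|I a b| = b - a.
Proof.
elim: b => [|b IH] bn.
  apply/eqP; rewrite cards_eq0; apply/eqP/setP => x; rewrite !inE; lia.
have bn' : b < n by lia.
have [ab|ab] := leqP a b.
  have -> : I a b.+1 = Ordinal bn' |: I a b.
    apply/setP => x; rewrite !inE -val_eqE /=; lia.
  rewrite cardsU1 IH; last lia.
  rewrite !inE /=; have -> : (a <= b < b) = false by lia.
  lia.
have -> : I a b.+1 = set0 by apply/setP => x; rewrite !inE; lia.
rewrite cards0; lia.
Qed.

Lemma pairE (g e : E) : g.1 = e.1 :> nat -> g.2 = e.2 :> nat -> g = e.
Proof. by case: g e => [a b] [c d] /= H1 H2; congr pair; apply: val_inj. Qed.


Variables (de al ga : nat) (eps : bool).
Hypothesis (Hde : 0 < de) (Hal : de.+1 < al) (Hga : al.+1 < ga) (Hn : ga.+1 < n).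

Definition Bset : {set E} :=
  if eps then
    (setX (I de al) (I ga n) :\: setX (I de de.+1) (I n.-1 n)) :|: setX (I 0 de) (I al ga)
    :|: setX (I de de.+1) (I al.+1 ga) :|: setX (I al al.+1) (I n.-1 n)
  else setX (I de al) (I ga n) :|: setX (I 0 de) (I al ga).

Definition memB (a b : nat) : bool :=
  [|| (de <= a < al) && (ga <= b) && ~~ (eps && (a == de) && (b == n.-1)),
      (a < de) && (al <= b < ga),
      eps && (a == de) && (al < b < ga) |
      eps && (a == al) && (b == n.-1)].

Lemma memBE (g : E) : (g \in Bset) = memB g.1 g.2.
Proof.
case: g => [a b]; have := ltn_ord a; have := ltn_ord b.
rewrite /Bset /memB; case: eps; rewrite !inE /=; lia.
Qed.


Lemma cardsU0 (A B : {set E}) : A :&: B = set0 -> #|A :|: B| = #|A| + #|B|.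
Proof. by move=> H; rewrite cardsU H cards0 subn0. Qed.

Ltac emp := apply/setP => -[x y]; rewrite !inE /=; try lia.

Lemma card_B : #|Bset| = (al - de) * (n - ga) + de * (ga - al) + eps * (ga - al - 1).
Proof.
rewrite /Bset; case: eps.
  rewrite cardsU0; last by emp.
  rewrite cardsU0; last by emp.
  rewrite cardsU0; last by emp.
  rewrite cardsDS; last by apply/subsetP => -[x y]; rewrite !inE /=; lia.
  rewrite !cardsX !card_I; try lia. nia.
rewrite cardsU0; last by emp.
rewrite !cardsX !card_I; lia.
Qed.


Lemma B_diag (g : E) : g \in Bset -> is_diagonal g.
Proof.
case: g => [a b]; rewrite memBE diagE /memB /=; have := ltn_ord b; lia.
Qed.

Lemma B_blocks (T : {set E}) : triangulation T -> Bset :&: T != set0.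
Proof.
move=> Htr; apply/negP => /eqP H0.
have noB : forall g, g \in T -> ~~ memB g.1 g.2.
  move=> g gT; rewrite -memBE; apply/negP => gB.
  have : g \in Bset :&: T by rewrite inE gB gT.
  by rewrite H0 inE.
have noE : forall a b, edgeb T a b -> a.+1 < b -> ~~ ((a == 0) && (b == n.-1)) -> ~~ memB a b.
  move=> a b /edgebP [H|[H1 H2]|[g gT [H1 H2]]] ab nab.
  - lia.
  - move: nab; rewrite H1 H2; lia.
  - by rewrite -H1 -H2; apply: noB.
have corner : eps -> edgeb T de n.-1 -> False.
  move=> He ec.
  have [k [kk e1 e2]] := triangle Htr (u:=de) (v:=n.-1) ltac:(lia) ltac:(lia) ec.
  have m1 : de.+1 < k -> ~~ memB de k by move=> h; apply: noE => //; lia.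
  have m2 : k.+1 < n.-1 -> ~~ memB k n.-1 by move=> h; apply: noE => //; lia.
  move: m1 m2; rewrite /memB He /=; lia.
have desc : forall d i j, j - i <= d -> i < de -> ga <= j < n -> edgeb T i j -> False.
  elim=> [|d IH] i j dij ide jga eij; first lia.
  have [k [kk e1 e2]] := triangle Htr (u:=i) (v:=j) ltac:(lia) ltac:(lia) eij.
  have [kde|kde] := ltnP k de.
    by apply: (IH k j) => //; lia.
  have [kga|kga] := leqP ga k.
    by apply: (IH i k) => //; lia.
  have [kal|kal] := ltnP k al.
    have := noE k j e2 ltac:(lia) ltac:(lia).
    rewrite /memB.
    case He : eps => /=; last by lia.
    move=> H; apply: (corner He).
    have [h1 h2] : k = de /\ j = n.-1 by lia.
    by rewrite -h1 -h2.
  have := noE i k e1 ltac:(lia) ltac:(lia).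
  rewrite /memB; lia.
apply: (desc n 0 n.-1) => //; try lia.
by rewrite /edgeb; apply/orP; left; apply/orP; right; rewrite !eqxx.
Qed.


Lemma not_blocker (B T : {set E}) : triangulation T ->
  (forall g, g \in T -> g \in B -> False) -> ~~ blocker B.
Proof.
move=> Htr H; apply/negP => /andP [_ /forallP /(_ T)]; rewrite Htr /=.
case/set0Pn => g; rewrite inE => /andP [gB gT]; exact: H gT gB.
Qed.

Ltac finish_min a b := move=> [x y];
  rewrite !inE memBE diagE /inner /outer /hasv /memB /= => ? /andP [/eqP + ?];
  apply; apply: pairE => /=; lia.

Lemma B_min (e : E) : e \in Bset -> ~~ blocker (Bset :\ e).
Proof.
case: e => [a b]; rewrite memBE /memB /= => Hm.
have an := ltn_ord a; have bn := ltn_ord b.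
case/or4P: Hm => Hm.
- have [bl|bl] : (b : nat) = n.-1 \/ (b : nat) < n.-1 by lia.
    apply: (@not_blocker _ (dfan n a b al.+1 0)).
      apply: dfan_tri; lia.
    finish_min a b.
  apply: (@not_blocker _ (dfan n a b al 0)).
    apply: dfan_tri; lia.
  finish_min a b.
- apply: (@not_blocker _ (dfan n a b al.-1 ga)).
    apply: dfan_tri; lia.
  finish_min a b.
- apply: (@not_blocker _ (dfan n de n.-1 b 0)).
    apply: dfan_tri; lia.
  finish_min a b.
- apply: (@not_blocker _ (dfan n de n.-1 al 0)).
    apply: dfan_tri; lia.
  finish_min a b.
Qed.


Lemma B_nt : nt_blocker ((al - de) * (n - ga) + de * (ga - al) + eps * (ga - al - 1)) Bset.
Proof.
rewrite /nt_blocker /saturated_blocker card_B eqxx andbT.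
have Hb : blocker Bset.
  apply/andP; split.
    by apply/subsetP => g /B_diag; rewrite inE.
  by apply/forallP => T; apply/implyP => /B_blocks.
rewrite Hb /=; apply/forallP => e; apply/implyP; exact: B_min.
Qed.

End Fam.

Lemma arith (m t r : nat) : r < 4 -> 
 ~ (r = 0 /\ t = 2 * (m * m) + 2 * m - 2) ->
 (m * 4 + r) * (m * 4 + r) + 2 * (m * 4 + r) <= 8 * t + 11 ->
 8 * t + 16 <= (m * 4 + r) * (m * 4 + r) + 4 * (m * 4 + r) ->
 5 <= m ->
 m * (2 * m + r) + 1 <= t /\ t + 1 - m * (2 * m + r) <= m * 4 + r - 2 * m - 2.
Proof.
move=> r4 gen h1 h2 m5.
have [M HM] : exists M, M = m * m by eexists.
have e1 : (m * 4 + r) * (m * 4 + r) = 16 * M + 8 * (m * r) + r * r by rewrite HM; nia.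
have e2 : m * (2 * m + r) = 2 * M + m * r by rewrite HM; nia.
rewrite e2; rewrite e1 in h1 h2; rewrite -HM in gen.
clear e1 e2 HM.
case: r r4 gen h1 h2 => [|[|[|[|r]]]] r4 gen h1 h2; rewrite ?muln0 ?muln1; try lia.
Qed.
Lemma arith2 m t : 5 <= m -> t = 2*(m*m)+2*m-2 ->
  (m.+1 - 1) * (m * 4 + 0 - (2 * m - 1)) + 1 * (2 * m - 1 - m.+1) + false * (2 * m - 1 - m.+1 - 1) = t.
Proof.
move=> m5 ->.
have -> : m.+1 - 1 = m by lia.
have -> : m * 4 + 0 - (2 * m - 1) = 2 * m + 1 by lia.
rewrite mul0n addn0 mul1n mulnDr mulnA (mulnC m 2); lia.
Qed.

Lemma arith3 m r t K p V : 0 < m -> K = m * (2 * m + r) -> K + 1 <= t ->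
  t + 1 - K <= m * 4 + r - 2 * m - 2 -> p = t + 1 - K -> V = m * 4 + r - p - 2 * m - 1 ->
  (V + p - V) * (m * 4 + r - (V + p + m)) + V * (V + p + m - (V + p)) +
    true * (V + p + m - (V + p) - 1) = t.
Proof.
move=> m0 HK h1 h2 hp hV.
have -> : V + p - V = p by lia.
have -> : m * 4 + r - (V + p + m) = m.+1 by lia.
have -> : V + p + m - (V + p) = m by lia.
have -> : V = 2 * m + r - 1 - p by lia.
rewrite /= mul1n.
have hp2 : p <= 2 * m + r - 1 by lia.
set W := 2 * m + r - 1 - p.
have hW : p + W = 2 * m + r - 1 by rewrite /W; lia.
have E1 : p * m.+1 + W * m = p + (p + W) * m by rewrite mulnSr mulnDl; lia.
rewrite E1 hW.
have E2 : (2 * m + r - 1) * m = 2 * m * m + r * m - m.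
  rewrite !mulnBl !mulnDl mul1n; lia.
rewrite E2.
have HK2 : K = 2 * m * m + r * m by rewrite HK mulnDr mulnA (mulnC m 2) (mulnC m r).
have : m <= 2 * m * m + r * m by nia.
lia.
Qed.

Theorem lemma3p5 (n t : nat) :
  21 <= n ->
  n ^ 2 + 2 * n <= 8 * t + 11 ->
  8 * t + 16 <= n ^ 2 + 4 * n ->
  exists B : {set 'I_n * 'I_n}, nt_blocker t B.
Proof.
move=> n21 h1 h2.
have sq : n ^ 2 = n * n by rewrite expnS expn1.
rewrite sq in h1 h2; clear sq.
set m := n %/ 4; set r := n %% 4.
have nE : n = m * 4 + r by rewrite /m /r -divn_eq.
have r4 : r < 4 by rewrite /r ltn_mod.
clearbody m r.
subst n.
have m5 : 5 <= m by lia.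
have [hi|gen] : (r = 0 /\ t = 2 * (m * m) + 2 * m - 2) \/
    ~ (r = 0 /\ t = 2 * (m * m) + 2 * m - 2) by lia.
  case: hi => r0 tE; subst r.
  have := @B_nt (m * 4 + 0) 1 m.+1 (2 * m - 1) false ltac:(lia) ltac:(lia) ltac:(lia) ltac:(lia).
  rewrite (arith2 m5 tE).
  by move=> H; eexists; exact: H.
have [HK1 HK2] := arith r4 gen h1 h2 m5.
set K := m * (2 * m + r) in HK1 HK2.
set p := t + 1 - K.
set V := m * 4 + r - p - 2 * m - 1.
have := @B_nt (m * 4 + r) V (V + p) (V + p + m) true ltac:(lia) ltac:(lia) ltac:(lia) ltac:(lia).
rewrite (@arith3 m r t K p V) //; last lia.
by move=> H; eexists; exact: H.
Qed.
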